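(* Let $a\geq 3$ and $m\geq 2a^2-a+2$ be integers, and suppose $[C(m,a)]$ is colored with red and blue so that there is no monochromatic solution of $L(m,a)$ in $[C(m,a)]$, with both $a-2$ and $a-1$ red. If $d$ is an integer with $a\mid d$ and $m-1\leq d\leq 2m-2$, then $d/a$ is blue.
   Context: For integers $m\geq 3$, $a\geq 1$, $L(m,a)$ denotes the equation $x_1+x_2+\cdots+x_{m-1}=a x_m$. For a positive integer $n$, $[n]=\{1,\dots,n\}$. A solution of $L(m,a)$ in $[n]$ is an $m$-tuple $(x_1,\dots,x_m)\in[n]^m$ (entries not necessarily distinct) satisfying the equation; given a 2-coloring of $[n]$, it is monochromatic if all $x_i$ have the same color. $C(m,a)$ denotes $\left\lceil \frac{m-1}{a}\left\lceil \frac{m-1}{a}\right\rceil\right\rceil$. *)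

(* Defs.v *)
From mathcomp Require Import all_boot.
Set Implicit Arguments. Unset Strict Implicit. Unset Printing Implicit Defensive.

Definition ceil_div (p q : nat) : nat := (p + q - 1) %/ q.

(* C(m,a) = ceil( (m-1)/a * ceil((m-1)/a) ) = ceil( (m-1) * ceil((m-1)/a) / a ) *)
Definition Cma (m a : nat) : nat := ceil_div ((m - 1) * ceil_div (m - 1) a) a.

(* A solution of L(m,a) in [n]: an m-tuple (x_1,...,x_{m-1}, x_m), represented
   as xs : 'I_(m-1) -> nat for x_1..x_{m-1} and y for x_m, all in [1,n],
   with x_1 + ... + x_{m-1} = a * x_m. *)
Definition is_solution (m : nat) (a n : nat) (xs : 'I_(m - 1) -> nat) (y : nat) : Prop :=
  (forall i, 1 <= xs i <= n) /\ 1 <= y <= n /\ \sum_(i < m - 1) xs i = a * y.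

(* A 2-coloring of [n] is col : nat -> bool (true = red, false = blue);
   only values on [n] are relevant. *)
Definition monochromatic (col : nat -> bool) {m : nat} (xs : 'I_(m - 1) -> nat) (y : nat) : Prop :=
  forall i, col (xs i) = col y.

Definition no_mono_solution (col : nat -> bool) (m a n : nat) : Prop :=
  forall (xs : 'I_(m - 1) -> nat) (y : nat), @is_solution m a n xs y -> ~ monochromatic col xs y.

(* Main.v *)
Require Import Defs.
From mathcomp Require Import all_boot.
From mathcomp Require Import zify.

Lemma sum_nth_ord n (s : seq nat) : size s = n ->
  \sum_(i < n) nth 0 s i = sumn s.
Proof.
move=> <-; rewrite sumnE (big_nth 0) big_mkord //.
Qed.

Lemma sol3 col m a n y k1 v1 k2 v2 v3 :
  no_mono_solution col m a n -> k1 + k2 <= m - 1 ->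
  1 <= v1 <= n -> 1 <= v2 <= n -> 1 <= v3 <= n -> 1 <= y <= n ->
  col v1 = col y -> col v2 = col y -> col v3 = col y ->
  k1 * v1 + k2 * v2 + (m - 1 - k1 - k2) * v3 = a * y -> False.
Proof.
move=> H Hk H1 H2 H3 Hy C1 C2 C3 Hs.
pose s := nseq k1 v1 ++ nseq k2 v2 ++ nseq (m - 1 - k1 - k2) v3.
have Hsz : size s = m - 1 by rewrite /s !size_cat !size_nseq; lia.
have Hall : forall x, x \in s -> (1 <= x <= n) /\ col x = col y.
  move=> x; rewrite /s !mem_cat => /orP [|/orP []] /nseqP [-> _]; by [].
apply: (H (fun i => nth 0 s i) y).
- split; [|split => //].
  + move=> i; apply: (proj1 (Hall _ _)); rewrite mem_nth // Hsz //.
  + rewrite sum_nth_ord // /s !sumn_cat !sumn_nseq; lia.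
- move=> i; apply: (proj2 (Hall _ _)); rewrite mem_nth // Hsz //.
Qed.

Lemma ceil_div_ge p q : 0 < q -> p <= q * ceil_div p q.
Proof.
move=> q0; rewrite /ceil_div.
have := divn_eq (p + q - 1) q; have := ltn_pmod (p + q - 1) q0.
set z := (p + q - 1) %/ q; set w := (p + q - 1) %% q. nia.
Qed.

Lemma ar1 c N U q r : (c+3)*(c+3) <= N ->
  (c+3) * U <= N * (c+2) < (c+3) * U + (c+3) ->
  (c+3) * U - N + (c + 2) = q * (c + 2) + r -> r < c + 2 ->
  N * (c+1) <= (c+3) * q /\ (c+3) * (q+1) <= N * (c+2).
Proof.
move=> HN HU HS Hr.
have hN1 : c + 3 <= N by apply: leq_trans HN; apply: leq_pmulr; lia.
have E1 : N * (c+2) = N * (c+1) + N by nia.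
have hX : N * (c+1) - (c+1) <= q * (c+2) by lia.
have h2 := leq_mul (leqnn (c+3)) hX.
rewrite mulnBr in h2.
have E3 : (c+3) * (N * (c+1)) = (c+2) * (N * (c+1)) + N * (c+1) by nia.
have E4 : (c+3) * (q * (c+2)) = (c+2) * ((c+3) * q) by nia.
have h5 : (c+3) * (c+1) <= N * (c+1) := leq_mul hN1 (leqnn _).
have h6 : (c+3)*(c+1) <= (c+3)*(c+3) by apply: leq_mul; lia.
split.
- suff HH : (c + 2) * (N * (c + 1)) <= (c + 2) * ((c + 3) * q).
    by move: HH; rewrite leq_pmul2l; [done|lia].
  lia.
- have qU : q < U.
    rewrite ltnNge; apply/negP => Uq.
    have h7 := leq_mul (leqnn (c+2)) Uq.
    have E5 : (c+3) * U = (c+2) * U + U by nia.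
    (* q*(c+2) >= U*(c+2), so (c+3)U - N + c+2 >= (c+2)U, U + c + 2 >= N *)
    have hU : N <= U + c + 2 by rewrite mulnC in h7; lia.
    have h8 : N * (c+2) + (c+3) <= (c+3) * U.
      have h9 := leq_mul (leqnn (c+3)) hU.
      rewrite !mulnDr in h9.
      have : N * (c+2) + (c+3) <= (c+3) * N by nia.
      have : (c+3)*c + (c+3)*2 <= (c+3)*(c+3) by nia.
      lia.
    lia.
  have := leq_mul (leqnn (c+3)) qU. rewrite addn1. lia.
Qed.

Lemma ar2 c N U q r : 1 <= c -> (c+3)*(c+3) <= N ->
  (c+3) * U <= N * (c+2) < (c+3) * U + (c+3) ->
  (c+3) * U - 2 * N + 2 * (c + 1) = q * (c + 1) + r -> r < c + 1 ->
  N * (c+1) <= (c+3) * q /\ (c+3) * (q+1) <= N * (c+2).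
Proof.
move=> Hc HN HU HS Hr.
have hN1 : c + 3 <= N by apply: leq_trans HN; apply: leq_pmulr; lia.
have E1 : N * (c+2) = N * c + 2 * N by nia.
have hX : N * c <= q * (c+1) by lia.
have h2 := leq_mul (leqnn (c+3)) hX.
have h3 : (c+1) * (N * (c+1)) <= (c+3) * (N * c) by nia.
have E4 : (c+3) * (q * (c+1)) = (c+1) * ((c+3) * q) by nia.
split.
- suff HH : (c + 1) * (N * (c + 1)) <= (c + 1) * ((c + 3) * q).
    by move: HH; rewrite leq_pmul2l; [done|lia].
  lia.
- have qU : q < U.
    rewrite ltnNge; apply/negP => Uq.
    have h7 := leq_mul (leqnn (c+1)) Uq.
    have E5 : (c+3) * U = (c+1) * U + 2 * U by nia.
    have hU : N <= U + c + 1 by rewrite mulnC in h7; lia.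
    have h8 : N * (c+2) + (c+3) <= (c+3) * U.
      have h9 := leq_mul (leqnn (c+3)) hU.
      rewrite !mulnDr in h9.
      have : N * (c+2) + (c+3) <= (c+3) * N by nia.
      have : (c+3)*c + (c+3)*1 <= (c+3)*(c+3) by nia.
      lia.
    lia.
  have := leq_mul (leqnn (c+3)) qU. rewrite addn1. lia.
Qed.

Lemma eq_split r q j : r <= j -> r * (q + 1) + (j - r) * q = q * j + r.
Proof. move=> h; nia. Qed.

Lemma mul_pos_r x y : 0 < x -> x <= y * 1 -> 0 < y.
Proof. move=> h1 h2; nia. Qed.

Lemma Nc2 N c : N * (c + 2) = N * c + 2 * N.
Proof. nia. Qed.

Lemma finish col m a C U N q r j v :
  no_mono_solution col m a C -> N = m - 1 -> r < j -> j <= N -> 1 <= q -> q + 1 <= C ->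
  1 <= v <= C -> 1 <= U <= C -> col q = col U -> col (q + 1) = col U -> col v = col U ->
  a * U - v * N + v * j = q * j + r -> v * N <= a * U -> False.
Proof.
move=> H EN Hr Hj q1 qC Hv HU c1 c2 c3 HS HvN.
apply: (@sol3 col m a C U r (q+1) (j - r) q v H) => //.
- rewrite -EN; lia.
- apply/andP; split => //; lia.
- apply/andP; split => //; lia.
- rewrite -EN.
  have Eq := @eq_split r q j (ltnW Hr).
  have E : (N - r - (j - r)) * v = N * v - j * v by rewrite -mulnBl; congr (_ * _); lia.
  rewrite E. nia.
Qed.

Lemma l2 N c U : 1 <= c -> c + 3 <= N -> N * (c+2) < (c+3) * U + (c+3) -> 2 * N <= (c+3) * U.
Proof. move=> *; nia. Qed.

Lemma l1 N c U : c + 3 <= N -> N * (c+2) < (c+3) * U + (c+3) -> 1 * N <= (c+3) * U.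
Proof. move=> *; nia. Qed.

Theorem lemma9 (m a : nat) (col : nat -> bool) :
  3 <= a ->
  2 * a ^ 2 - a + 2 <= m ->
  no_mono_solution col m a (Cma m a) ->
  col (a - 2) = true -> col (a - 1) = true ->
  forall d : nat, a %| d -> m - 1 <= d <= 2 * m - 2 ->
  col (d %/ a) = false.
Proof.
move=> Ha Hm H Ca2 Ca1 d Hd Hdr.
have Hdk := divnK Hd.
have HN0 : 2 * (a * a) - a + 1 <= m - 1 by rewrite expnS expn1 in Hm; lia.
have Ct : m - 1 <= a * ceil_div (m - 1) a by apply: ceil_div_ge; lia.
have CC : (m - 1) * ceil_div (m - 1) a <= a * Cma m a by apply: ceil_div_ge; lia.
move: Hdk Ct CC HN0 H.
move: (ceil_div (m - 1) a) => t.
move: (Cma m a) => C.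
move: (d %/ a) => k.
have [N EN] : exists N, N = m - 1 by exists (m - 1).
rewrite -EN.
have [c Ec] : exists c, a = c + 3 by exists (a - 3); lia.
subst a.
have E1 : c + 3 - 1 = c + 2 by lia.
have E2 : c + 3 - 2 = c + 1 by lia.
rewrite E1 E2 in Ca1 Ca2 *.
move=> Hdk Ct CC HN0 H.
have HN : (c+3)*(c+3) <= N by nia.
have hN1 : c + 3 <= N by apply: leq_trans HN; apply: leq_pmulr; lia.
have Ht : c + 2 <= t by nia.
have HCP : N * (c+2) <= (c+3) * C.
  apply: leq_trans CC; exact: leq_mul.
have leC : forall b, (c+3) * b <= N * (c+2) -> b <= C.
  move=> b Hb; have : (c+3) * b <= (c+3) * C by exact: leq_trans HCP.
  by rewrite leq_pmul2l; [|lia].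
have EN1 : N * (c+2) = N * (c+1) + N by nia.
have I1 : forall b, 1 <= b -> N * (c+1) <= (c+3) * b <= N * (c+2) -> col b = false.
  move=> b Hb Hab; have bC : b <= C by apply: leC; lia.
  case E: (col b) => //; exfalso.
  apply: (@sol3 col m (c+3) C b ((c+3) * b - N * (c+1)) (c + 2) 0 (c + 2) (c + 1) H).
  - lia.
  - have : c + 2 <= C by apply: leC; nia. lia.
  - have : c + 2 <= C by apply: leC; nia. lia.
  - have : c + 2 <= C by apply: leC; nia. lia.
  - lia.
  - by rewrite E.
  - by rewrite E.
  - by rewrite E.
  - rewrite -EN.
    set e := (c+3) * b - N * (c+1).
    have Ee : (c+3) * b = N * (c+1) + e by lia.
    have eN : e <= N by lia.
    rewrite Ee. nia.
set U := (N * (c+2)) %/ (c+3).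
have HU : (c+3) * U <= N * (c+2) < (c+3) * U + (c+3).
  have := divn_eq (N * (c+2)) (c+3); have := @ltn_pmod (N * (c+2)) (c+3) ltac:(lia).
  rewrite -/U. move: ((N * (c+2)) %% (c+3)) => w. lia.
have U1 : 1 <= U.
  case: (posnP U) => [U0|] //. rewrite U0 in HU. nia.
have colU : col U = false by apply: I1 => //; lia.
case Ek: (col k) => //; exfalso.
have k1 : 1 <= k by nia.
have kC : k <= C by apply: leC; nia.
case E1c: (col 1).
- case E2c: (col 2).
  + apply: (@sol3 col m (c+3) C k (d - N) 2 0 2 1 H).
    * lia.
    * have : 2 <= C by apply: leC; nia. lia.
    * have : 2 <= C by apply: leC; nia. lia.
    * have : 1 <= C by apply: leC; nia. lia.
    * lia.
    * by rewrite E2c Ek.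
    * by rewrite E2c Ek.
    * by rewrite E1c Ek.
    * rewrite -EN; lia.
  + case: (posnP c) => [c0|cpos].
      by subst c; rewrite E2c in Ca1.
    set S := (c+3) * U - 2 * N + 2 * (c + 1).
    have HS := divn_eq S (c+1).
    have Hr := @ltn_pmod S (c+1) ltac:(lia).
    move: HS Hr. rewrite -/S. 
    move: (S %/ (c+1)) (S %% (c+1)) => q r HS Hr.
    have HS' : (c+3) * U - 2 * N + 2 * (c + 1) = q * (c + 1) + r by rewrite -HS.
    have [Hq1 Hq2] := @ar2 c N U q r cpos HN HU HS' Hr.
    have q1 : 1 <= q.
      rewrite lt0n; apply/eqP => q0; move: Hq1; rewrite q0 muln0 leqn0 muln_eq0; lia.
    have cq : col q = false by apply: I1 => //; lia.
    have cq1 : col (q+1) = false by apply: I1; lia.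
    apply: (@finish col m (c+3) C U N q r (c+1) 2 H EN Hr _ q1 _ _ _ _ _ _ _ _).
    * by apply: leq_trans hN1; rewrite leq_add2l.
    * exact: (leC _ Hq2).
    * by rewrite /= leC //; apply: leq_mul; lia.
    * by rewrite U1 leC // (proj1 (andP HU)).
    * by rewrite cq colU.
    * by rewrite cq1 colU.
    * by rewrite E2c colU.
    * exact: HS'.
    * by apply: l2 => //; case/andP: HU.
- set S := (c+3) * U - N + (c + 2).
  have HS := divn_eq S (c+2).
  have Hr := @ltn_pmod S (c+2) ltac:(lia).
  move: HS Hr. rewrite -/S.
  move: (S %/ (c+2)) (S %% (c+2)) => q r HS Hr.
  have HS' : (c+3) * U - N + (c + 2) = q * (c + 2) + r by rewrite -HS.
  have [Hq1 Hq2] := @ar1 c N U q r HN HU HS' Hr.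
  have q1 : 1 <= q.
    rewrite lt0n; apply/eqP => q0; move: Hq1; rewrite q0 muln0 leqn0 muln_eq0; lia.
  have cq : col q = false by apply: I1 => //; lia.
  have cq1 : col (q+1) = false by apply: I1; lia.
  apply: (@finish col m (c+3) C U N q r (c+2) 1 H EN Hr _ q1 _ _ _ _ _ _ _ _).
  * by apply: leq_trans hN1; rewrite leq_add2l.
  * exact: (leC _ Hq2).
  * by rewrite /= leC //; apply: leq_mul; lia.
  * by rewrite U1 leC // (proj1 (andP HU)).
  * by rewrite cq colU.
  * by rewrite cq1 colU.
  * by rewrite E1c colU.
  * by rewrite !mul1n; exact: HS'.
  * by apply: l1 => //; case/andP: HU.
Qed.
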